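(* Let $F$ be a field whose characteristic is not $2$, let $\alpha\in F\setminus\{0\}$, and let $k\geq 4$ be an integer. Then every $x\in F$ can be written as $x=a_1a_2\cdots a_k$ with $a_1,\ldots,a_k\in F$ satisfying $a_1+a_2+\cdots+a_k=\alpha$. *)

(* Defs.v *)
From mathcomp Require Import all_boot all_algebra.

(* Main.v *)
Require Import Defs.
From mathcomp Require Import all_boot all_algebra.
From mathcomp Require Import ring.
From Stdlib Require Import Classical.
Import GRing.Theory.
Local Open Scope ring_scope.

Lemma four (F : fieldType) (beta x : F) :
  (2%N \notin [pchar F]) -> beta != 0 ->
  exists a b c d : F, x = a * b * c * d /\ a + b + c + d = beta.
Proof.
move=> h2 hb.
have n2 : (2%:R : F) != 0.
  by apply/negP => h; move/negP: h2; apply; rewrite inE /= h.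
case: (classic (exists s : F, s != 0 /\ s ^+ 2 != x)) => [[s [hs he]]|hn].
  have he' : s ^+ 2 - x != 0 by rewrite subr_eq0.
  exists ((s ^+ 2 - x) / (s * beta)), (- ((s ^+ 2 - x) / (s * beta))),
    (beta * s ^+ 2 / (s ^+ 2 - x)), (- (beta * x / (s ^+ 2 - x))).
  split; field; by rewrite ?he' ?hs ?hb.
have H : forall s : F, s != 0 -> s ^+ 2 = x.
  move=> s hs; apply/eqP; apply/negPn/negP => hne; apply: hn; by exists s.
have x1 : x = 1 by rewrite -(H 1 (oner_neq0 F)) expr1n.
have b2 : beta ^+ 2 = 1 by rewrite H.
have t2 : (2%:R : F) ^+ 2 = 1 by rewrite H.
exists beta, beta, beta, beta; split.
  have -> : beta * beta * beta * beta = (beta ^+ 2) ^+ 2 by ring.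
  by rewrite b2 expr1n.
have -> : beta + beta + beta + beta = beta * (2%:R ^+ 2) by ring.
by rewrite t2 mulr1.
Qed.

Lemma gen (F : fieldType) (k : nat) :
  (2%N \notin [pchar F]) -> (4 <= k)%N ->
  forall (beta x : F), beta != 0 -> exists a : 'I_k -> F,
    x = \prod_(i < k) a i /\ \sum_(i < k) a i = beta.
Proof.
move=> h2; elim: k => [//|k IH] hk beta x hb.
have n2 : (2%:R : F) != 0.
  by apply/negP => h; move/negP: h2; apply; rewrite inE /= h.
have [hk3|hk3|hk3] := ltngtP k 3.
  by move: hk; rewrite ltnS leqNgt hk3.
  have hb2 : beta *+ 2 != 0 by rewrite -mulr_natr mulf_neq0.
  have [a [Hp Hs]] := IH hk3 (beta *+ 2) (x / (- beta)) hb2.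
  exists (fun i => match unlift ord0 i with Some j => a j | None => - beta end).
  rewrite big_ord_recl [in X in _ /\ X]big_ord_recl /= unlift_none.
  under eq_bigr do rewrite liftK.
  under [in X in _ /\ X]eq_bigr do rewrite liftK.
  rewrite -Hp; split.
    by field; rewrite oppr_eq0.
  by rewrite Hs mulr2n; ring.
subst k.
have [a [b [c [d [Hp Hs]]]]] := @four _ beta x h2 hb.
exists (fun i : 'I_4 => nth 0 [:: a; b; c; d] i).
rewrite !big_ord_recl !big_ord0 /=.
split; first by rewrite Hp; ring.
by rewrite -Hs; ring.
Qed.

Theorem theorem1p1 (F : fieldType) (alpha : F) (k : nat) :
  (2%N \notin [pchar F]) -> alpha != 0 -> (4 <= k)%N ->
  forall x : F, exists a : 'I_k -> F,
    x = \prod_(i < k) a i /\ \sum_(i < k) a i = alpha.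
Proof.
move=> h2 ha hk x; exact: gen.
Qed.
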